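(* Let $\mathcal{A}$ be a (finite) activation algebra and $M$ a finite set of morphisms of $\mathcal{T}_\mathcal{A}$. If $\tau\in M^\omega$ has an accepting run $(\Theta_i,\sigma_i)_{i\in\omega}$, then $\tau$ describes a path through $\mathcal{T}_\mathcal{A}$ which satisfies the trace condition of $\mathcal{T}_\mathcal{A}$.
   Context: An activation algebra $\mathcal{A}=(A,\le,\vee,0,\alpha)$ is a finite join-semilattice $(A,\le,\vee)$ with least element $0$, together with a distinguished element $\alpha\in A$ with $\alpha\neq 0$. The category $\mathcal{T}_\mathcal{A}$ has the finite sets as objects; a morphism $R\colon X\to Y$ is a relation $R\subseteq X\times A\times Y$; the composite of $R\colon X\to Y$ and $R'\colon Y\to Z$ is $R'\circ R=\{(x,c,z)\mid \exists y\in Y,\ a,b\in A:\ (x,a,y)\in R,\ (y,b,z)\in R',\ a\vee b=c\}$, and the identity is $1_X=\{(x,0,x)\mid x\in X\}$. A sequence $\tau\in M^\omega$ of morphisms describes a path if $\mathrm{cod}(\tau_i)=\mathrm{dom}(\tau_{i+1})$ for all $i$; write $P(n<m)=\tau_{m-1}\circ\cdots\circ\tau_n$ for $n<m$. Such a path satisfies the trace condition if there exist a strictly increasing sequence $k_0<k_1<\cdots$ of natural numbers and elements $s_i\in\mathrm{dom}(\tau_{k_i})$ with $(s_i,\alpha,s_{i+1})\in P(k_i<k_{i+1})$ for all $i$. Safra boards. Fix a countable set $\mathcal{C}\supseteq\omega$ of chips. A Safra board on $\mathcal{A}$ and a finite set $X$ is a pair $(\Theta,\sigma)$ where the control $\Theta\subseteq\mathcal{C}$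 is a finite set with a linear order $\le$, and $\sigma\colon X\times A\to\mathcal{P}(\mathcal{P}(\Theta))$, such that every $\gamma\in\Theta$ belongs to some $S\in\sigma(x,a)$. The elements $S\in\sigma(x,a)$ are called stacks (bottom = $\le$-least, top = $\le$-greatest element). A chip $\gamma\in\Theta$ is covered if it is not the top element of any stack $S\in\sigma(x,a)$, for any $x,a$. Transitions between boards: (i) $\tau$-successor, for $\tau\colon X\to Y$, written $(\Theta,\sigma)\xrightarrow{\tau}(\Theta',\sigma')$: first let $\sigma^*(y,a)=\{S\mid S\in\sigma(x,b)\text{ for some }x\in X,b\in A, c\in A \text{ with }(x,c,y)\in\tau\text{ and }a=b\vee c\}$ and let $\Theta^*$ be the set of chips occurring in some stack of $\sigma^*$, with the order inherited from $\Theta$. Then choose a finite linearly ordered $\Theta^\circ\subseteq\mathcal{C}\setminus\Theta$ and a bijection $\iota$ from $\{y\in Y\mid\sigma^*(y,\alpha)\neq\emptyset\}$ onto $\Theta^\circ$, and set $\sigma'(y,\alpha)=\emptyset$, $\sigma'(y,0)=\sigma^*(y,0)\cup\{S\cup\{\iota(y)\}\mid S\in\sigma^*(y,\alpha)\}$, $\sigma'(y,a)=\sigma^*(y,a)$ for $a\notin\{0,\alpha\}$, and $\Theta'=\Theta^*\oplus\Theta^\circ$ (concatenation: all elements of $\Theta^*$ below all elements of $\Theta^\circ$). (ii) Weakening $(\Theta,\sigma)\xrightarrow{W}(\Theta',\sigma')$: a board on the same set with $\sigma'(x,a)\subseteq\sigma(x,a)$ for all $x,a$ and $\Theta'\subseteq\Theta$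 (induced order) the set of chips still occurring in stacks of $\sigma'$. (iii) $\gamma$-reset for a covered $\gamma\in\Theta$, $(\Theta,\sigma)\xrightarrow{R_\gamma}(\Theta',\sigma')$: for a stack $S$ let $S{\upharpoonright}\gamma=\{z\in S\mid z\le\gamma\}$ if $\gamma\in S$ and $S{\upharpoonright}\gamma=S$ otherwise; $\sigma'(x,a)=\{S{\upharpoonright}\gamma\mid S\in\sigma(x,a)\}$, and $\Theta'$ is the set of chips occurring in stacks of $\sigma'$. (iv) Population $(\Theta,\sigma)\xrightarrow{P}(\Theta,\sigma')$: $\sigma(x,0)\subseteq\sigma'(x,0)\subseteq\sigma(x,0)\cup\{\emptyset\}$ for all $x$ and $\sigma'(x,a)=\sigma(x,a)$ for $a\neq 0$. A run of $\tau\in M^\omega$ is a sequence $(\Theta_i,\sigma_i)_{i\in\omega}$ of boards together with a strictly monotone $\iota\colon\omega\to\omega$ such that for $i=\iota(n)$ one has $(\Theta_i,\sigma_i)\xrightarrow{\tau_n}(\Theta_{i+1},\sigma_{i+1})$, and for $i$ not in the image of $\iota$ the step $(\Theta_i,\sigma_i)\to(\Theta_{i+1},\sigma_{i+1})$ is a weakening, a population, or a $\gamma$-reset for some $\gamma\in\Theta_i$. A run is accepting if there are $N\in\omega$ and $\gamma\in\bigcap_{n\ge N}\Theta_n$ such that the step from index $i$ to $i+1$ is a $\gamma$-reset for infinitely many $i$. *)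

(* Defs.v *)
From HB Require Import structures.
From mathcomp Require Import all_boot.
From mathcomp Require Export finmap.
Set Implicit Arguments. Unset Strict Implicit. Unset Printing Implicit Defensive.
Local Open Scope fset_scope.

Record activation_algebra := ActAlg {
  aa_carrier :> finType;
  aa_join : aa_carrier -> aa_carrier -> aa_carrier;
  aa_zero : aa_carrier;
  aa_alpha : aa_carrier;
  aa_joinA : forall x y z, aa_join x (aa_join y z) = aa_join (aa_join x y) z;
  aa_joinC : forall x y, aa_join x y = aa_join y x;
  aa_joinxx : forall x, aa_join x x = x;
  aa_join0x : forall x, aa_join aa_zero x = x;
  aa_alpha_neq0 : aa_alpha <> aa_zero }.

Definition aa_le (A : activation_algebra) (x y : A) : Prop := aa_join x y = y.

Section Defs.
Variables (V : choiceType) (A : activation_algebra).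

(* Objects of T_A: finite sets (finite subsets of the universe V).
   A morphism R : X -> Y is a relation R ⊆ X × A × Y. *)
Record morph := Morph {
  mdom : {fset V};
  mcod : {fset V};
  mrel : V -> A -> V -> Prop;
  mrel_sub : forall x a y, mrel x a y -> x \in mdom /\ y \in mcod }.

(* Composite R' ∘ R (first R, then R'). *)
Definition comp_rel (R R' : V -> A -> V -> Prop) : V -> A -> V -> Prop :=
  fun x c z => exists y a b, R x a y /\ R' y b z /\ aa_join a b = c.

Definition describes_path (tau : nat -> morph) : Prop :=
  forall i, mcod (tau i) = mdom (tau i.+1).

Fixpoint Pseg (tau : nat -> morph) (n l : nat) : V -> A -> V -> Prop :=
  match l with
  | 0 => mrel (tau n)
  | l'.+1 => comp_rel (Pseg tau n l') (mrel (tau (addn n l'.+1)))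
  end.

(* P(n < m) = tau_{m-1} ∘ ... ∘ tau_n  (meaningful for n < m) *)
Definition Ppath (tau : nat -> morph) (n m : nat) := Pseg tau n (subn m n).-1.

Definition trace_condition (tau : nat -> morph) : Prop :=
  exists (k : nat -> nat) (s : nat -> V),
    (forall i, k i < k i.+1) /\
    (forall i, s i \in mdom (tau (k i))) /\
    (forall i, Ppath tau (k i) (k i.+1) (s i) (aa_alpha A) (s i.+1)).

(* The control Theta is a duplicate-free
   sequence (its linear order is the list order); sigma maps (x, a) to a
   finite set of stacks, each stack a finite set of chips. *)
Variable C : countType.

Record board := Board {
  theta : seq C;
  sigma : V -> A -> {fset {fset C}} }.

Definition valid_board (X : {fset V}) (B : board) : Prop :=
  uniq (theta B) /\
  (forall x a, x \notin X -> sigma B x a = fset0) /\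
  (forall x a S g, S \in sigma B x a -> g \in S -> g \in theta B) /\
  (forall g, g \in theta B -> exists x a S, S \in sigma B x a /\ g \in S).

Definition occurs_in (st : V -> A -> {fset C} -> Prop) (g : C) : Prop :=
  exists x a S, st x a S /\ g \in S.

Definition inherits (Th Th' : seq C) (P : C -> Prop) : Prop :=
  subseq Th' Th /\ forall g, g \in Th' <-> P g.

Definition is_top (Th : seq C) (g : C) (S : {fset C}) : Prop :=
  g \in S /\ forall d, d \in S -> index d Th <= index g Th.

Definition covered (B : board) (g : C) : Prop :=
  forall x a S, S \in sigma B x a -> ~ is_top (theta B) g S.

Definition trunc (Th : seq C) (g : C) (S : {fset C}) : {fset C} :=
  if g \in S then [fset z in S | index z Th <= index g Th] else S.

Definition sigma_star (t : morph) (B : board) : V -> A -> {fset C} -> Prop :=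
  fun y a S => exists x b c, mrel t x c y /\ a = aa_join b c /\ S \in sigma B x b.

Definition succ_step (t : morph) (B B' : board) : Prop :=
  let st := sigma_star t B in
  let al := aa_alpha A in
  let z := aa_zero A in
  exists (ts thetao : seq C) (iota : V -> C),
    inherits (theta B) ts (occurs_in st) /\
    uniq thetao /\ (forall g, g \in thetao -> g \notin theta B) /\
    (forall y, y \in mcod t -> (exists S, st y al S) -> iota y \in thetao) /\
    (forall y1 y2, y1 \in mcod t -> (exists S, st y1 al S) ->
                   y2 \in mcod t -> (exists S, st y2 al S) ->
                   iota y1 = iota y2 -> y1 = y2) /\
    (forall g, g \in thetao ->
       exists y, [/\ y \in mcod t, (exists S, st y al S) & iota y = g]) /\
    theta B' = ts ++ thetao /\
    (forall y S, S \in sigma B' y al <-> False) /\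
    (forall y S, S \in sigma B' y z <->
       (st y z S \/ exists S0, st y al S0 /\ S = S0 `|` [fset iota y])) /\
    (forall y a S, a <> al -> a <> z -> (S \in sigma B' y a <-> st y a S)).

Definition weak_step (B B' : board) : Prop :=
  (forall x a, sigma B' x a `<=` sigma B x a) /\
  inherits (theta B) (theta B') (occurs_in (fun x a S => S \in sigma B' x a)).

Definition reset_step (g : C) (B B' : board) : Prop :=
  g \in theta B /\ covered B g /\
  (forall x a S', S' \in sigma B' x a <->
      exists S, S \in sigma B x a /\ S' = trunc (theta B) g S) /\
  inherits (theta B) (theta B') (occurs_in (fun x a S => S \in sigma B' x a)).

Definition pop_step (B B' : board) : Prop :=
  theta B' = theta B /\
  (forall x, sigma B x (aa_zero A) `<=` sigma B' x (aa_zero A) /\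
             sigma B' x (aa_zero A) `<=` sigma B x (aa_zero A) `|` [fset fset0]) /\
  (forall x a, a <> aa_zero A -> sigma B' x a = sigma B x a).

Definition is_run (tau : nat -> morph) (Bs : nat -> board) (iota : nat -> nat)
    (Xs : nat -> {fset V}) : Prop :=
  (forall n, iota n < iota n.+1) /\
  (forall i, valid_board (Xs i) (Bs i)) /\
  (forall n, Xs (iota n) = mdom (tau n) /\ Xs (iota n).+1 = mcod (tau n) /\
             succ_step (tau n) (Bs (iota n)) (Bs (iota n).+1)) /\
  (forall i, (forall n, iota n <> i) ->
     Xs i.+1 = Xs i /\
     (weak_step (Bs i) (Bs i.+1) \/ pop_step (Bs i) (Bs i.+1) \/
      exists g, reset_step g (Bs i) (Bs i.+1))).

Definition accepting (Bs : nat -> board) (iota : nat -> nat) : Prop :=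
  exists (N : nat) (g : C),
    (forall n, N <= n -> g \in theta (Bs n)) /\
    (forall m, exists i, m <= i /\ (forall n, iota n <> i) /\
                         reset_step g (Bs i) (Bs i.+1)).

End Defs.

(* Main.v *)
Require Import Defs.
From HB Require Import structures.
From mathcomp Require Import all_boot.
From mathcomp Require Import finmap.
From Stdlib Require Lists.List.
From Stdlib Require Import Classical ClassicalEpsilon.
Set Implicit Arguments. Unset Strict Implicit. Unset Printing Implicit Defensive.
Local Open Scope fset_scope.

Lemma subseq_index_le (T : eqType) (s2 s1 : seq T) x y :
  uniq s2 -> subseq s1 s2 -> x \in s1 -> y \in s1 ->
  (index x s1 <= index y s1) = (index x s2 <= index y s2).
Proof.
elim: s2 s1 => [|z s2 IH] [|w s1] //=.
move=> /andP[zn us2]; case: eqP => [<-|wz] hs.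
- rewrite !inE => hx hy.
  case: (eqVneq w x) => [->|zx] //=; case: (eqVneq w y) => [ey|zy] //=.
  rewrite !ltnS; apply: IH => //.
  + by move: hx; rewrite eq_sym (negbTE zx).
  + by move: hy; rewrite eq_sym (negbTE zy).
- move=> hx hy.
  have ss := mem_subseq hs.
  have hx2 := ss _ hx; have hy2 := ss _ hy.
  have zx : z != x by apply/eqP => ex; move: zn; rewrite ex hx2.
  have zy : z != y by apply/eqP => ey; move: zn; rewrite ey hy2.
  rewrite (negbTE zx) (negbTE zy) ltnS.
  exact: (IH (w::s1) us2 hs hx hy).
Qed.

Lemma trunc_sub (C : countType) (Th : seq C) g (S : {fset C}) : trunc Th g S `<=` S.
Proof.
rewrite /trunc; case: ifP => _ //.
apply/fsubsetP => d; rewrite !inE => /andP[] //.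
Qed.

Section Main.
Variables (V : choiceType) (A : activation_algebra) (C : countType).
Variable tau : nat -> morph V A.
Variables (Bs : nat -> board V A C) (io : nat -> nat) (Xs : nat -> {fset V}).
Hypothesis Hrun : is_run tau Bs io Xs.
Variables (N : nat) (g : C).
Hypothesis HgN : forall n, N <= n -> g \in theta (Bs n).
Hypothesis Hres : forall m, exists i, m <= i /\ (forall n, io n <> i) /\
                         reset_step g (Bs i) (Bs i.+1).

Local Notation al := (aa_alpha A).
Local Notation z0 := (aa_zero A).

Lemma io_mono m n : m < n -> io m < io n.
Proof.
case: Hrun => hm _.
elim: n => // n IH; rewrite ltnS leq_eqVlt => /orP[/eqP -> //|h].
exact: ltn_trans (IH h) (hm n).
Qed.

Lemma io_inj m n : io m = io n -> m = n.
Proof.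
move=> e; case: (ltngtP m n) => // h; have := io_mono h; rewrite e ltnn //.
Qed.

Lemma io_le m n : m <= n -> io m <= io n.
Proof.
rewrite leq_eqVlt => /orP[/eqP -> //|h]; exact: ltnW (io_mono h).
Qed.

Lemma chip_in i x a S d : S \in sigma (Bs i) x a -> d \in S -> d \in theta (Bs i).
Proof.
case: Hrun => _ [hv _]; case: (hv i) => _ [_ [h _]]; exact: h.
Qed.

Definition Node := (V * A * {fset C})%type.

Definition NodeAt i (u : Node) := u.2 \in sigma (Bs i) u.1.1 u.1.2 /\ g \in u.2.

Definition StepR i x b (S : {fset C}) y a (S' : {fset C}) :=
  (forall n, io n = i -> exists c, mrel (tau n) x c y /\
     ((a = aa_join b c /\ S' `<=` S) \/ (aa_join b c = al /\ a = z0 /\ ~~ (S' `<=` S)))) /\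
  ((forall n, io n <> i) -> [/\ x = y, a = b, S' `<=` S &
      (reset_step g (Bs i) (Bs i.+1) -> S' = trunc (theta (Bs i)) g S)]).

Definition Step i (u v : Node) :=
  [/\ NodeAt i u, NodeAt i.+1 v & StepR i u.1.1 u.1.2 u.2 v.1.1 v.1.2 v.2].

Lemma pred_ex i v : N <= i -> NodeAt i.+1 v -> exists u, Step i u v.
Proof.
case: v => [[y a'] S'] hi [/= hS' hg].
have gth := HgN hi.
case: (classic (exists n, io n = i)) => [[n hn]|hn].
- subst i. case: Hrun => _ [_ [hsucc _]].
  have [_ [_ hs]] := hsucc n.
  case: hs => ts [tho [iot [hinh [hutho [hfresh [hio [hioinj [hiosurj [hth [hal [hz hother]]]]]]]]]]].
  have transp : sigma_star (tau n) (Bs (io n)) y a' S' ->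
      exists u, Step (io n) u (y, a', S').
    case=> x [b [c [hm [ha hS]]]].
    exists (x, b, S'); split => //=.
    split => [n' /io_inj -> |hn']; last by have := hn' n.
    by exists c; split => //; left; split => //; exact: fsubset_refl.
  case: (eqVneq a' al) => [ea|nal].
    by subst a'; have := (hal y S').1 hS'.
  case: (eqVneq a' z0) => [ez|nz]; last first.
    move/eqP: nal => nal; move/eqP: nz => nz.
    by apply: transp; apply: (hother y a' S' nal nz).1.
  subst a'.
  case: ((hz y S').1 hS') => [|[S0 [hst eS]]]; first exact: transp.
  move: (hst) => [x [b [c [hm [ha hS0]]]]].
  have ymc := (mrel_sub hm).2.
  have iot_in := hio y ymc (ex_intro _ S0 hst).
  have iot_new := hfresh _ iot_in.
  exists (x, b, S0); split => //=.
  + split => //. move: hg; rewrite eS => /fsetUP [//|]; rewrite inE => /eqP eg.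
    by move: iot_new; rewrite -eg gth.
  + split => [n' /io_inj -> |hn']; last by have := hn' n.
    exists c; split => //; right; split => //; split => //.
    apply/negP => hsub. have : iot y \in S0.
      by apply: (fsubsetP hsub); rewrite eS; apply/fsetUP; right; rewrite inE.
    by move/(chip_in hS0); rewrite (negbTE iot_new).
- have hn' : forall n, io n <> i by move=> n e; apply: hn; exists n.
  case: Hrun => _ [_ [_ hnon]].
  have [_ hstep] := hnon i hn'.
  have mk : forall S, S \in sigma (Bs i) y a' -> S' `<=` S ->
      (reset_step g (Bs i) (Bs i.+1) -> S' = trunc (theta (Bs i)) g S) ->
      exists u, Step i u (y, a', S').
    move=> S hS hsub hr; exists (y, a', S); split => //=.
      by split => //; apply: (fsubsetP hsub).
    by split => [n e|_]; [have := hn' n | split].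
  case: (classic (reset_step g (Bs i) (Bs i.+1))) => hr.
    have [_ [_ [hiff _]]] := hr.
    have [S [hS eS]] := (hiff y a' S').1 hS'.
    by apply: (mk S hS); [rewrite eS; exact: trunc_sub | ].
  case: hstep => [[hsub _]|[[_ [hp0 hpa]]|[g0 [_ [_ [hiff _]]]]]].
  + apply: (mk S'); [exact: (fsubsetP (hsub y a')) | exact: fsubset_refl | by move/hr].
  + case: (eqVneq a' z0) => [ez|nz].
      subst a'. have := fsubsetP (hp0 y).2 _ hS' => /fsetUP [hS|].
        by apply: (mk S'); [ | exact: fsubset_refl | move/hr].
      rewrite inE => /eqP e; by move: hg; rewrite e inE.
    apply: (mk S'); [ | exact: fsubset_refl | by move/hr].
    by rewrite -hpa //; apply/eqP.
  + have [S [hS eS]] := (hiff y a' S').1 hS'.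
    by apply: (mk S hS); [rewrite eS; exact: trunc_sub | move/hr].
Qed.

Fixpoint Anc i u d w : Prop :=
  match d with
  | 0 => u = w /\ NodeAt i u
  | d'.+1 => exists v, Anc i u d' v /\ Step (i + d') v w
  end.

Lemma anc_start i u d w : Anc i u d w -> NodeAt i u.
Proof. elim: d w => [|d IH] w /=; [by case | by case=> v [/IH]]. Qed.

Lemma anc_back d w : NodeAt (N + d) w -> exists u, Anc N u d w.
Proof.
elim: d w => [|d IH] w.
  by rewrite addn0 => h; exists w.
rewrite addnS => h.
have [v hv] := pred_ex (leq_addr d N) h.
have [u hu] := IH v (let: And3 a _ _ := hv in a).
by exists u; exists v.
Qed.

Lemma anc_trunc i u d' w d : Anc i u d' w -> d <= d' -> exists w', Anc i u d w'.
Proof.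
elim: d' w => [|d' IH] w.
  by rewrite leqn0 => h /eqP ->; exists w.
move=> h; rewrite leq_eqVlt => /orP[/eqP ->|]; first by exists w.
rewrite ltnS; case: h => v [hv _]; exact: IH hv.
Qed.

Lemma anc_front i u d w : Anc i u d.+1 w -> exists v, Step i u v /\ Anc i.+1 v d w.
Proof.
elim: d w => [|d IH] w.
  case=> v [[<- hu]]; rewrite addn0 => hs; exists w; split => //.
  by split => //; case: hs.
case=> v [hv hs].
have [v' [h1 h2]] := IH v hv.
exists v'; split => //; exists v; split => //.
by rewrite addSnnS.
Qed.

Definition good i u := NodeAt i u /\ forall d, exists w, Anc i u d w.

Definition nodes i : seq Node :=
  flatten [seq flatten [seq [seq (x, a, St) | St <- enum_fset (sigma (Bs i) x a)]
     | a <- enum A] | x <- enum_fset (Xs i)].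

Lemma node_in i u : NodeAt i u -> u \in nodes i.
Proof.
case: u => [[x a] S] [/= hS _].
have hx : x \in Xs i.
  apply/negPn/negP => hx.
  case: Hrun => _ [hv _]; case: (hv i) => _ [h _].
  by move: hS; rewrite h // inE.
apply/flatten_mapP; exists x => //.
apply/flatten_mapP; exists a; first by rewrite mem_enum.
by apply/mapP; exists S.
Qed.

Lemma pigeon (T : eqType) (L : seq T) (P : T -> nat -> Prop) :
  (forall x d d', d <= d' -> P x d' -> P x d) ->
  (forall d, exists2 x, x \in L & P x d) ->
  exists2 x, x \in L & forall d, P x d.
Proof.
move=> mono; elim: L => [|y L IH] hall.
  by have [x] := hall 0.
case: (classic (forall d, P y d)) => hy.
  by exists y => //; rewrite inE eqxx.
have [d0 hd0] := not_all_ex_not _ _ hy.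
have [|x hx hP] := IH.
  move=> d; have [x] := hall (maxn d d0).
  rewrite inE => /orP[/eqP ->|hx] hP.
    by exfalso; apply: hd0; apply: mono hP; exact: leq_maxr.
  by exists x => //; apply: mono hP; exact: leq_maxl.
by exists x => //; rewrite inE hx orbT.
Qed.

Lemma node_ex j : N <= j -> exists w, NodeAt j w.
Proof.
move=> hj; case: Hrun => _ [hv _]; case: (hv j) => _ [_ [_ h]].
have [x [a [S [hS hgS]]]] := h g (HgN hj).
by exists (x, a, S).
Qed.

Lemma root_good : exists u, good N u.
Proof.
have h1 : forall x d d', d <= d' -> (exists w, Anc N x d' w) -> exists w, Anc N x d w.
  move=> x d d' hd [w hw]; exact: anc_trunc hw hd.
have h2 : forall d, exists2 x, x \in nodes N & exists w, Anc N x d w.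
  move=> d; have [w hw] := node_ex (leq_addr d N).
  have [u hu] := anc_back hw.
  by exists u; [apply: node_in; exact: anc_start hu | exists w].
have [u _ hu] := pigeon h1 h2.
exists u; split => //; have [w hw] := hu 0; exact: anc_start hw.
Qed.

Lemma good_next i u : good i u -> exists v, Step i u v /\ good i.+1 v.
Proof.
case=> hu hd.
have h1 : forall x d d', d <= d' -> (Step i u x /\ exists w, Anc i.+1 x d' w) ->
    (Step i u x /\ exists w, Anc i.+1 x d w).
  move=> x d d' hdd [hs [w hw]]; split => //; exact: anc_trunc hw hdd.
have h2 : forall d, exists2 x, x \in nodes i.+1 & (Step i u x /\ exists w, Anc i.+1 x d w).
  move=> d; have [w hw] := hd d.+1.
  have [v [hs ha]] := anc_front hw.
  exists v; last by split => //; exists w.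
  by apply: node_in; case: hs.
have [v _ hv] := pigeon h1 h2.
have [hs _] := hv 0; exists v; split => //; split; first by case: hs.
  by move=> d; have [_ ?] := hv d.
Qed.

Definition pickf (T : Type) (d : T) (P : T -> Prop) : T :=
  proj1_sig (constructive_indefinite_description (fun x => (exists y, P y) -> P x)
     (match classic (exists y, P y) with
      | or_introl h => let: ex_intro y hy := h in ex_intro _ y (fun _ => hy)
      | or_intror h => ex_intro _ d (fun e => False_ind _ (h e))
      end)).

Lemma pickfP (T : Type) (d : T) (P : T -> Prop) : (exists y, P y) -> P (pickf d P).
Proof. rewrite /pickf; case: constructive_indefinite_description => x hx /=; exact: hx. Qed.

Lemma path_ex : exists Q : nat -> Node, forall t, N <= t -> Step t (Q t) (Q t.+1).
Proof.
have [u0 hu0] := root_good.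
pose nxt i u := pickf u (fun v => Step i u v /\ good i.+1 v).
pose p := fix p j := match j with 0 => u0 | j.+1 => nxt (addn N j) (p j) end.
have hp : forall j, good (N + j) (p j) /\ Step (N + j) (p j) (p j.+1).
  elim=> [|j [IH _]].
    rewrite addn0 /=; split => //.
    by have := pickfP u0 (good_next hu0); rewrite addn0; case.
  have hg : good (N + j.+1) (p j.+1).
    by rewrite addnS; have := pickfP (p j) (good_next IH); case.
  split => //; rewrite [p j.+2]/=.
  by have := pickfP (p j.+1) (good_next hg); case.
exists (fun t => p (t - N)) => t ht.
have [_ h] := hp (t - N); rewrite subnKC // in h.
by rewrite subSn.
Qed.

Lemma uniq_theta i : uniq (theta (Bs i)).
Proof. by case: Hrun => _ [hv _]; case: (hv i). Qed.

Lemma theta_order i d e :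
  d \in theta (Bs i) -> e \in theta (Bs i) -> d \in theta (Bs i.+1) -> e \in theta (Bs i.+1) ->
  (index d (theta (Bs i)) <= index e (theta (Bs i))) =
  (index d (theta (Bs i.+1)) <= index e (theta (Bs i.+1))).
Proof.
move=> hd he hd' he'; have hu := uniq_theta i.
case: (classic (exists n, io n = i)) => [[n hn]|hn].
- subst i; case: Hrun => _ [_ [hsucc _]].
  have [_ [_ hs]] := hsucc n.
  case: hs => ts [tho [iot [hinh [hutho [hfresh [_ [_ [_ [hth _]]]]]]]]].
  move: hd' he'; rewrite hth => hd' he'.
  have ints : forall x, x \in theta (Bs (io n)) -> x \in ts ++ tho -> x \in ts.
    move=> x hx; rewrite mem_cat => /orP[//|/hfresh]; by rewrite hx.
  have hdt := ints _ hd hd'; have het := ints _ he he'.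
  rewrite !index_cat hdt het.
  by rewrite -(subseq_index_le hu hinh.1).
- have hn' : forall n, io n <> i by move=> n e'; apply: hn; exists n.
  case: Hrun => _ [_ [_ hnon]].
  have [_ hstep] := hnon i hn'.
  case: hstep => [[_ hinh]|[[-> _]|[g0 [_ [_ [_ hinh]]]]]] //.
  + by rewrite (subseq_index_le hu hinh.1).
  + by rewrite (subseq_index_le hu hinh.1).
Qed.

Lemma not_succ_between m u : io m < u -> u < io m.+1 -> forall n, io n <> u.
Proof.
move=> h1 h2 n e; subst u.
case: (leqP n m) => hnm.
  by have := io_le hnm; rewrite leqNgt h1.
by have := io_le hnm; rewrite leqNgt h2.
Qed.

Lemma dpath : describes_path tau.
Proof.
move=> n; case: Hrun => _ [_ [hsucc hnon]].
have [_ [e1 _]] := hsucc n; have [e2 _] := hsucc n.+1.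
rewrite -e1 -e2.
have hk : forall k, (io n).+1 + k <= io n.+1 -> Xs ((io n).+1 + k) = Xs (io n).+1.
  elim=> [|k IH] hk; first by rewrite addn0.
  rewrite addnS in hk *.
  have hk' := ltnW hk.
  have [-> _] := hnon _ (not_succ_between (leq_trans (ltnSn _) (leq_addr _ _)) hk).
  exact: IH.
have := hk (io n.+1 - (io n).+1); rewrite subnKC //; last exact: io_mono.
by move=> ->.
Qed.

Definition Rel k p (s : V) (b : A) (x : V) :=
  (p = k /\ x = s /\ b = z0) \/ (k < p /\ Ppath tau k p s b x).

Lemma rel_le k p s b x : Rel k p s b x -> k <= p.
Proof. by case=> [[->] //|[h _]]; exact: ltnW. Qed.

Lemma rel_comp k p s b x c y : Rel k p s b x -> mrel (tau p) x c y ->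
  Ppath tau k p.+1 s (aa_join b c) y.
Proof.
case=> [[-> [-> ->]]|[hkp hP]] hm.
  by rewrite /Ppath subSnn /= aa_join0x.
rewrite /Ppath subSn; last exact: ltnW.
move: hP; rewrite /Ppath.
have e : p - k = (p - k).-1.+1 by rewrite prednK // subn_gt0.
rewrite e /= => hP.
exists x, b, c; split => //; split => //.
by rewrite -e subnKC //; exact: ltnW.
Qed.

Section Path.
Variable Q : nat -> Node.
Hypothesis hQ : forall t, N <= t -> Step t (Q t) (Q t.+1).

Local Notation xq t := (Q t).1.1.
Local Notation aq t := (Q t).1.2.
Local Notation Sq t := (Q t).2.

Definition Cr t := ~~ (Sq t.+1 `<=` Sq t).

Lemma cr_succ t : N <= t -> Cr t -> exists n, io n = t /\ exists c,
  [/\ mrel (tau n) (xq t) c (xq t.+1), aa_join (aq t) c = al & aq t.+1 = z0].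
Proof.
move=> ht hc; have [_ _ [hsc hnon]] := hQ ht.
case: (classic (exists n, io n = t)) => [[n hn]|hn].
  exists n; split => //; have [c [hm [[_ hs]|[h1 [h2 _]]]]] := hsc n hn.
    by move: hc; rewrite /Cr hs.
  by exists c.
have [_ _ hs _] := hnon (fun n e => hn (ex_intro _ n e)).
by move: hc; rewrite /Cr hs.
Qed.

Lemma reset_cr r r' : N <= r -> r < r' -> (forall n, io n <> r) ->
  reset_step g (Bs r) (Bs r.+1) -> reset_step g (Bs r') (Bs r'.+1) ->
  exists t, r < t < r' /\ Cr t.
Proof.
move=> hNr hrr hnr hres hres'.
apply: NNPP => hno.
have nocr : forall t, r < t < r' -> Sq t.+1 `<=` Sq t.
  move=> t ht; apply/negPn/negP => hc; apply: hno; by exists t.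
have [[hSr hgr] [hSr1 hgr1] [_ hnon]] := hQ hNr.
have [_ _ _ htr] := hnon hnr.
have etr := htr hres.
have sub : forall k t, r < t -> t + k <= r' -> Sq (t + k) `<=` Sq t.
  move=> k t ht; elim: k => [|k IH] hk; first by rewrite addn0 fsubset_refl.
  rewrite addnS in hk *.
  apply: fsubset_trans (IH (ltnW hk)).
  apply: nocr; rewrite hk andbT; exact: leq_trans ht (leq_addr _ _).
have hNr' : N <= r' by apply: leq_trans hNr (ltnW hrr).
have [[hSr' hgr'] _ _] := hQ hNr'.
have [_ [hcov _]] := hres'.
have ntop := hcov _ _ _ hSr'.
have [d [hdS hdi]] : exists d, d \in Sq r' /\
    ~ (index d (theta (Bs r')) <= index g (theta (Bs r'))).
  apply: NNPP => hn; apply: ntop; split => // d hd.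
  apply: NNPP => hn2; apply: hn; by exists d.
have din : forall t, r < t <= r' -> d \in Sq t.
  move=> t /andP[h1 h2]; have := sub (r' - t) t h1; rewrite subnKC // => hs.
  exact: (fsubsetP (hs (leqnn _))).
have hNt : forall t, r <= t -> N <= t by move=> t ht; exact: leq_trans hNr ht.
have gin : forall t, r <= t -> g \in Sq t.
  by move=> t ht; have [[_ ?] _ _] := hQ (hNt t ht).
have Sin : forall t, r <= t -> Sq t \in sigma (Bs t) (xq t) (aq t).
  by move=> t ht; have [[? _] _ _] := hQ (hNt t ht).
have base : index d (theta (Bs r)) <= index g (theta (Bs r)).
  have := din r.+1; rewrite ltnSn hrr => /(_ isT).
  rewrite etr /trunc hgr inE => /andP[_] //.
have K : forall k, r.+1 + k <= r' ->
    index d (theta (Bs (r.+1 + k))) <= index g (theta (Bs (r.+1 + k))).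
  elim=> [|k IH] hk.
    rewrite addn0 -theta_order //.
    - by apply: (chip_in (Sin r (leqnn r))); apply: (fsubsetP (trunc_sub (theta (Bs r)) g _));
         rewrite -etr; apply: din; rewrite ltnSn hrr.
    - exact: chip_in (Sin r (leqnn r)) hgr.
    - by apply: (chip_in (Sin r.+1 (leqnSn r))); apply: din; rewrite ltnSn hrr.
    - exact: chip_in (Sin r.+1 (leqnSn r)) (gin _ (leqnSn r)).
  rewrite addnS in hk *.
  set t := (r.+1 + k)%N in IH hk *.
  have hrt' : r < t by rewrite /t addSn ltnS leq_addr.
  have hrt := ltnW hrt'.
  rewrite -theta_order //; first exact: IH (ltnW hk).
  - by apply: (chip_in (Sin t hrt)); apply: din; rewrite hrt' (ltnW hk).
  - exact: chip_in (Sin t hrt) (gin t hrt).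
  - by apply: (chip_in (Sin t.+1 (leq_trans hrt (leqnSn t)))); apply: din;
       rewrite hk (ltn_trans hrt') //.
  - exact: chip_in (Sin t.+1 (leq_trans hrt (leqnSn t))) (gin _ (leq_trans hrt (leqnSn t))).
have := K (r' - r.+1); rewrite subnKC // => /(_ (leqnn _)).
by move/hdi.
Qed.


Lemma inf_cr m : exists t, [/\ m <= t, N <= t & Cr t].
Proof.
have [r [hr [hnr hres]]] := Hres (maxn m N).
have [r' [hr' [_ hres']]] := Hres r.+1.
have hNr : N <= r by apply: leq_trans hr; exact: leq_maxr.
have [t [/andP[h1 h2] hc]] := reset_cr hNr hr' hnr hres hres'.
exists t; split => //.
- by apply: leq_trans (ltnW h1); apply: leq_trans hr; exact: leq_maxl.
- exact: leq_trans hNr (ltnW h1).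
Qed.

Lemma label_inv t n t' : N <= t -> io n = t -> aq t.+1 = z0 ->
  (forall u, t < u < t' -> ~~ Cr u) ->
  forall k, t.+1 + k <= t' -> exists m,
    [/\ io m < t.+1 + k, t.+1 + k <= io m.+1 &
        Rel n.+1 m.+1 (xq t.+1) (aq (t.+1 + k)) (xq (t.+1 + k))].
Proof.
move=> hNt hn ha hno; elim=> [|k IH] hk.
  exists n; rewrite addn0 -hn ltnSn; split => //; first exact: io_mono.
  by left; rewrite hn ha.
rewrite addnS in hk *.
have [m [h1 h2 hR]] := IH (ltnW hk).
set u := (t.+1 + k)%N in h1 h2 hR hk *.
have hNu : N <= u by apply: leq_trans hNt _; rewrite /u addSn ltnW // ltnS leq_addr.
have hsub : Sq u.+1 `<=` Sq u.
  have := hno u; rewrite /u addSn ltnS leq_addr hk /Cr => /(_ isT); by rewrite negbK.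
have [_ _ [hsc hnon]] := hQ hNu.
move: h2; rewrite leq_eqVlt => /orP[/eqP eu|hlt].
- have [c [hm [[ha' _]|[_ [_ hb]]]]] := hsc m.+1 (esym eu); last by rewrite hsub in hb.
  exists m.+1; split.
  + by rewrite eu.
  + by rewrite eu; exact: io_mono.
  + right; split; first by have := rel_le hR; rewrite ltnS.
    by rewrite ha'; exact: rel_comp hR hm.
- have [ex ea _ _] := hnon (not_succ_between h1 hlt).
  exists m; split => //; first exact: ltn_trans h1 _.
  by rewrite ea -ex.
Qed.

Lemma next_cr t : exists t', [/\ t < t', Cr t' & forall u, t < u < t' -> ~~ Cr u].
Proof.
have ex : exists u, (t < u) && Cr u.
  by have [u [h1 _ h2]] := inf_cr t.+1; exists u; rewrite h1 h2.
case: (ex_minnP ex) => t' /andP[h1 h2] hmin.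
exists t'; split => // u /andP[hu1 hu2]; apply/negP => hc.
by have := hmin u; rewrite hu1 hc => /(_ isT); rewrite leqNgt hu2.
Qed.

Lemma trace : trace_condition tau.
Proof.
have [c0 [_ hc0N hc0]] := inf_cr 0.
pose P t t' := [/\ t < t', Cr t' & forall u, t < u < t' -> ~~ Cr u].
pose nx t := pickf t (P t).
pose cs j := iter j nx c0.
have hcs : forall j, N <= cs j /\ Cr (cs j).
  elim=> [|j [IH1 IH2]] //=.
  have [h1 h2 _] := pickfP (cs j) (next_cr (cs j)).
  by split => //; apply: leq_trans IH1 (ltnW h1).
have hnext : forall j, P (cs j) (cs j.+1).
  by move=> j; exact: (pickfP (cs j) (next_cr (cs j))).
pose nidx t := pickf 0 (fun n => io n = t).
have hnid : forall j, io (nidx (cs j)) = cs j /\ exists c,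
   [/\ mrel (tau (nidx (cs j))) (xq (cs j)) c (xq (cs j).+1),
       aa_join (aq (cs j)) c = al & aq (cs j).+1 = z0].
  move=> j; have [h1 h2] := hcs j.
  have [n [hn hc]] := cr_succ h1 h2.
  have e : io (nidx (cs j)) = cs j := @pickfP _ 0 (fun n => io n = cs j) (ex_intro _ n hn).
  split => //; by rewrite (io_inj (etrans e (esym hn))).
have ltio : forall a b, io a < io b -> a < b.
  by move=> a b h; rewrite ltnNge; apply/negP => /io_le; rewrite leqNgt h.
exists (fun j => (nidx (cs j)).+1), (fun j => xq (cs j).+1); split; [|split].
- move=> j; rewrite ltnS; apply: ltio.
  have [e1 _] := hnid j; have [e2 _] := hnid j.+1.
  by rewrite e1 e2; case: (hnext j).
- move=> j; have [_ [c [hm _ _]]] := hnid j.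
  by rewrite -dpath; exact: (mrel_sub hm).2.
- move=> j.
  have [hN1 _] := hcs j.
  have [e1 [c1 [_ _ ha1]]] := hnid j.
  have [e2 [c2 [hm2 hj2 _]]] := hnid j.+1.
  have [hlt _ hno] := hnext j.
  have hk : (cs j).+1 + (cs j.+1 - (cs j).+1) <= cs j.+1 by rewrite subnKC.
  have [m [h1 h2 hR]] := label_inv hN1 e1 ha1 hno hk.
  move: h1 h2 hR; rewrite subnKC // => h1 h2 hR.
  have em : nidx (cs j.+1) = m.+1.
    apply/eqP; rewrite eqn_leq; apply/andP; split.
      by rewrite leqNgt; apply/negP => /io_mono; rewrite leqNgt e2 ltnS h2.
    by apply: ltio; rewrite e2.
  rewrite em in hm2 *; rewrite -hj2.
  exact: rel_comp hR hm2.
Qed.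
End Path.

End Main.

Theorem mainTheorem3 (V : choiceType) (A : activation_algebra) (C : countType)
    (emb : nat -> C) (emb_inj : injective emb)
    (M : seq (morph V A)) (tau : nat -> morph V A) :
  (forall n, Stdlib.Lists.List.In (tau n) M) ->
  (exists (Bs : nat -> board V A C) (iota : nat -> nat) (Xs : nat -> {fset V}),
      is_run tau Bs iota Xs /\ accepting Bs iota) ->
  describes_path tau /\ trace_condition tau.
Proof.
move=> _ [Bs [io [Xs [hrun [N [g [hgN hres]]]]]]].
split; first exact: dpath hrun.
have [Q hQ] := path_ex hrun hgN.
exact: (@trace _ _ _ _ _ _ _ hrun N g hres Q hQ).
Qed.
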